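(* Let $R_1>1$ be an odd integer, $R_2>1$ an odd squarefree integer with $\gcd(R_1,R_2)=1$, $N=R_1R_2$, and let $\chi(n)=\left(\frac{n}{R_1R_2}\right)$ be the Jacobi symbol. Then the $R_1\times R_2$ finite Zak transform of $\chi$ is $$X_{R_2}(j,k)=c_{R_2}\left(\frac{R_1}{R_2}\right)e^{-2\pi i\frac{R_1^{-1}jk}{R_2}}\left(\frac{j}{R_2}\right)\left(\frac{k}{R_1}\right),\qquad 0\le j<R_2,\ 0\le k<R_1,$$ where $R_1^{-1}$ is the inverse of $R_1$ modulo $R_2$ and $c_{R_2}=\sum_{b=0}^{R_2-1}\left(\frac{b}{R_2}\right)e^{2\pi i b/R_2}$.
   Context: $\left(\frac{a}{M}\right)$ denotes the Jacobi symbol for odd positive $M$ (zero when $\gcd(a,M)>1$). For $N=LM$ and an $N$-periodic sequence $x$, the finite Zak transform is $X_L(j,k)=\sum_{r=0}^{L-1}x(k+rM)e^{2\pi i rj/L}$, $0\le j<L$, $0\le k<M$; here $L=R_2$, $M=R_1$. *)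

(* Defs.v *)
From mathcomp Require Import all_boot all_order all_algebra.
From mathcomp Require Import all_classical all_reals.
From mathcomp Require Import trigo.
From mathcomp Require Import complex.
Set Implicit Arguments. Unset Strict Implicit. Unset Printing Implicit Defensive.
Import Order.TTheory GRing.Theory Num.Theory.
Local Open Scope ring_scope.

Definition legendre (a : int) (p : nat) : int :=
  if (p%:Z %| a)%Z then 0
  else if [exists x : 'I_p, (p%:Z %| (x%:Z) ^+ 2 - a)%Z] then 1 else -1.

Definition jacobi (a : int) (M : nat) : int :=
  \prod_(p <- primes M) legendre a p ^+ logn p M.

Definition squarefree (n : nat) : bool :=
  [forall p : 'I_n.+1, prime p ==> ~~ (p * p %| n)%N].

Definition ex (R : realType) (x : R) : R[i] :=
  Complex (cos (2 * pi * x)) (sin (2 * pi * x)).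

Definition zak (R : realType) (x : nat -> R[i]) (L M j k : nat) : R[i] :=
  \sum_(r < L) x (k + r * M)%N * ex ((r * j)%:R / L%:R).

Definition gauss (R : realType) (L : nat) : R[i] :=
  \sum_(b < L) (jacobi b L)%:~R * ex ((b : nat)%:R / L%:R : R).

(* Main.v *)
Require Import Defs.
From mathcomp Require Import all_boot all_order all_algebra all_solvable all_field.
From mathcomp Require Import all_classical all_reals.
From mathcomp Require Import trigo.
From mathcomp Require Import complex.
From mathcomp Require Import ring.
Set Implicit Arguments. Unset Strict Implicit. Unset Printing Implicit Defensive.
Import Order.TTheory GRing.Theory Num.Theory.
Local Open Scope ring_scope.


Section Fp.
Variable p : nat.
Hypothesis pr : prime p.

Lemma intr_Fp0 (z : int) : ((z%:~R : 'F_p) == 0) = (p %| z)%Z.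
Proof.
case: z => n.
  by rewrite -[(Posz n)%:~R]/(n%:R) -(dvdn_pcharf (pchar_Fp pr)).
rewrite NegzE mulrNz oppr_eq0 dvdzE /= -(dvdn_pcharf (pchar_Fp pr)).
done.
Qed.

Definition legF (u : 'F_p) : int :=
  if u == 0 then 0 else if [exists y : 'F_p, y ^+ 2 == u] then 1 else -1.

Lemma legendreE (a : int) : legendre a p = legF (a%:~R).
Proof.
rewrite /legendre /legF intr_Fp0; case: ifP => // _.
have -> : [exists x : 'I_p, (p%:Z %| (x%:Z) ^+ 2 - a)%Z] =
          [exists y : 'F_p, y ^+ 2 == a%:~R].
  apply/existsP/existsP => [[x Hx]|[y Hy]].
    exists (x%:R); rewrite -intr_Fp0 in Hx.
    by rewrite -subr_eq0; move: Hx; rewrite rmorphB /= rmorphXn /=.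
  have ylt : (val y < p)%N by rewrite -[X in (_ < X)%N](Fp_cast pr) ltn_ord.
  exists (Ordinal ylt); rewrite -intr_Fp0 rmorphB /= rmorphXn /= subr_eq0.
  by rewrite -pmulrn natr_Zp.
done.
Qed.

Lemma Fp_pow1 (x : 'F_p) : x != 0 -> x ^+ p.-1 = 1.
Proof.
move=> x0; apply: (mulfI x0); rewrite mulr1 -exprS prednK ?prime_gt0 //.
by have := expf_card x; rewrite card_Fp.
Qed.

Lemma Fp_prim : {z : 'F_p | p.-1.-primitive_root z}.
Proof.
have p1 : (0 < p.-1)%N by rewrite -ltnS prednK ?prime_gt0 // prime_gt1.
pose rs := enum (predC1 (0 : 'F_p)).
have : has p.-1.-primitive_root rs.
  apply: has_prim_root => //.
  - apply/allP => x; rewrite mem_enum => x0.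
    by rewrite unity_rootE Fp_pow1.
  - exact: enum_uniq.
  - by rewrite -cardE cardC1 card_Fp.
by case/hasP/sig2W => z _ Hz; exists z.
Qed.

Hypothesis podd : odd p.
Let z := sval Fp_prim.
Let zP : p.-1.-primitive_root z := svalP Fp_prim.

Lemma z_neq0 : z != 0.
Proof. by rewrite (prim_root_eq0 zP) -lt0n -ltnS prednK ?prime_gt0 // prime_gt1. Qed.

Lemma Fp_log (x : 'F_p) : x != 0 -> exists k, x = z ^+ k.
Proof. by move=> x0; have [i ->] := prim_rootP zP (Fp_pow1 x0); exists i. Qed.

Lemma Fp_sq_pow k : [exists y, y ^+ 2 == z ^+ k] = ~~ odd k.
Proof.
apply/existsP/idP => [[y /eqP Hy]|Hk].
  have y0 : y != 0.
    apply/eqP => y0; move: Hy; rewrite y0 expr0n /= => /esym/eqP.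
    by rewrite expf_eq0 (negbTE z_neq0) andbF.
  have [m Hm] := Fp_log y0.
  move: Hy; rewrite Hm -exprM => /eqP; rewrite (eq_prim_root_expr zP) => /eqP H.
  have d2 : (2 %| p.-1)%N.
    by rewrite dvdn2 -oddS prednK ?prime_gt0.
  have := congr1 (modn^~ 2) H; rewrite !modn_dvdm // => E.
  by rewrite -dvdn2 /dvdn -E modnMl.
exists (z ^+ (half k)); rewrite -exprM mulnC -[X in _ == z ^+ X](odd_double_half k).
by rewrite (negbTE Hk) add0n mul2n.
Qed.

Lemma legF_pow k : legF (z ^+ k) = if odd k then -1 else 1.
Proof.
rewrite /legF expf_eq0 (negbTE z_neq0) andbF Fp_sq_pow.
by case: (odd k).
Qed.

Lemma legFM (u v : 'F_p) : legF (u * v) = legF u * legF v.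
Proof.
have [->|u0] := eqVneq u 0; first by rewrite mul0r /legF eqxx mul0r.
have [->|v0] := eqVneq v 0; first by rewrite mulr0 /legF eqxx mulr0.
have [i ->] := Fp_log u0; have [j ->] := Fp_log v0.
rewrite -exprD !legF_pow oddD.
by case: (odd i); case: (odd j).
Qed.

Lemma legF_sum : \sum_(u : 'F_p) legF u = 0.
Proof.
have E : \sum_(u : 'F_p) legF u = \sum_(u : 'F_p) legF (z * u).
  by apply: (reindex_inj (mulfI z_neq0)).
have : \sum_(u : 'F_p) legF u = - \sum_(u : 'F_p) legF u.
  rewrite {1}E; under eq_bigr do rewrite legFM.
  by rewrite -mulr_sumr -[z]expr1 legF_pow /= mulN1r.
move/eqP; rewrite -subr_eq0 opprK -mulr2n -mulr_natr mulf_eq0 /= => /orP[/eqP//|//].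
Qed.

Lemma legendre_sum : \sum_(x < p) legendre x p = 0.
Proof.
rewrite (eq_bigr (fun x : 'I_p => legF ((Posz x)%:~R))); last by move=> i _; rewrite legendreE.
rewrite -(big_mkord xpredT (fun x : nat => legF ((Posz x)%:~R))).
rewrite -[X in \sum_(0 <= _ < X) _](Fp_cast pr) big_mkord.
rewrite -[RHS]legF_sum; apply: eq_bigr => i _.
by rewrite -pmulrn natr_Zp.
Qed.
End Fp.


Lemma leg_period p (a b : int) : prime p -> (p%:Z %| a - b)%Z -> legendre a p = legendre b p.
Proof.
move=> pr H; rewrite !(legendreE pr); congr legF.
by apply/eqP; rewrite -subr_eq0 -rmorphB /= intr_Fp0.
Qed.

Lemma legM p (a b : int) : prime p -> odd p -> legendre (a * b) p = legendre a p * legendre b p.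
Proof. by move=> pr po; rewrite !(legendreE pr) rmorphM /= legFM. Qed.

Lemma leg1 p : prime p -> legendre 1 p = 1.
Proof.
move=> pr; rewrite (legendreE pr) /legF /=.
by case: existsP => // -[]; exists 1; rewrite expr1n.
Qed.

Lemma leg_sq p (a : int) : ~~ (p%:Z %| a)%Z -> legendre a p ^+ 2 = 1.
Proof. by rewrite /legendre => /negbTE ->; case: ifP. Qed.

Lemma leg0 p (a : int) : (p%:Z %| a)%Z -> legendre a p = 0.
Proof. by rewrite /legendre => ->. Qed.

Lemma jacobi_big (a : int) M B : (0 < M)%N -> (M < B)%N ->
  jacobi a M = \prod_(0 <= q < B | prime q) legendre a q ^+ logn q M.
Proof.
move=> M0 MB; rewrite /jacobi.
have pe : perm_eq (primes M) [seq q <- index_iota 0 B | q \in primes M].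
  apply: uniq_perm; first exact: primes_uniq.
    by rewrite filter_uniq // iota_uniq.
  move=> q; rewrite mem_filter mem_index_iota /=; case: (boolP (q \in primes M)) => //= H.
  rewrite mem_primes in H; case/and3P: H => _ _ qM.
  by apply/esym/(leq_ltn_trans _ MB)/dvdn_leq.
rewrite (perm_big _ pe) big_filter big_mkcond [RHS]big_mkcond /=.
apply: eq_bigr => q _; rewrite mem_primes M0 /=.
case: (boolP (prime q)) => //= qp; case: (boolP (q %| M)%N) => // qM.
have -> : logn q M = 0%N.
  by apply/eqP; rewrite -leqn0 leqNgt logn_gt0 mem_primes qp M0 (negbTE qM).
by rewrite expr0.
Qed.

Lemma jacobiM_den (a : int) m n : (0 < m)%N -> (0 < n)%N ->
  jacobi a (m * n) = jacobi a m * jacobi a n.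
Proof.
move=> m0 n0.
have mn0 : (0 < m * n)%N by rewrite muln_gt0 m0.
rewrite !(@jacobi_big a _ (m * n).+1) //; last 2 first.
- by rewrite ltnS leq_pmull.
- by rewrite ltnS leq_pmulr.
rewrite -big_split /=; apply: eq_bigr => q _.
by rewrite lognM // exprD.
Qed.

Lemma prime_of_primes q M : q \in primes M -> prime q /\ (q %| M)%N.
Proof. by rewrite mem_primes => /and3P[]. Qed.

Lemma jacobiM_num (a b : int) M : odd M ->
  jacobi (a * b) M = jacobi a M * jacobi b M.
Proof.
move=> Mo; rewrite /jacobi -big_split /= big_seq [RHS]big_seq.
apply: eq_bigr => q /prime_of_primes[qp qM].
rewrite legM ?exprMn //; exact: dvdn_odd qM Mo.
Qed.

Lemma jacobi_period (a b : int) M : (M%:Z %| a - b)%Z -> jacobi a M = jacobi b M.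
Proof.
move=> H; rewrite /jacobi big_seq [RHS]big_seq.
apply: eq_bigr => q /prime_of_primes[qp qM].
rewrite (@leg_period q a b) //; apply: dvdz_trans H.
by rewrite dvdzE.
Qed.

Lemma jacobi1 M : jacobi 1 M = 1.
Proof.
rewrite /jacobi big_seq big1 // => q /prime_of_primes[qp _].
by rewrite leg1 // expr1n.
Qed.

Lemma jacobi_sq (a : nat) M : coprime a M -> jacobi a M ^+ 2 = 1.
Proof.
move=> co; rewrite /jacobi -prodrXl big_seq big1 // => q /prime_of_primes[qp qM].
rewrite exprAC leg_sq ?expr1n // dvdzE /=.
apply: (contraL _ co) => qa; rewrite /coprime; apply/negP => /eqP g1.
have : (q %| gcdn a M)%N by rewrite dvdn_gcd qa.
by rewrite g1 dvdn1 => /eqP q1; rewrite q1 in qp.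
Qed.

Lemma jacobi0 (a : int) M q : q \in primes M -> (q%:Z %| a)%Z -> jacobi a M = 0.
Proof.
move=> qM qa; rewrite /jacobi (bigD1_seq q) ?primes_uniq //=.
rewrite leg0 // expr0n; case: eqP => [|_]; last by rewrite mul0r.
by move/eqP; rewrite eqn0Ngt logn_gt0 qM.
Qed.

Lemma jacobi_mod (n : nat) M : jacobi (n %% M)%N M = jacobi n M.
Proof.
apply: jacobi_period; rewrite {2}(divn_eq n M) PoszD opprD addrCA subrr addr0.
by rewrite dvdzE abszN /= dvdn_mull.
Qed.


Section Ex.
Variable R : realType.

Lemma exD (x y : R) : ex (x + y) = ex x * ex y.
Proof.
rewrite /ex mulrDr cosD sinD /=.
congr Complex; ring.
Qed.

Lemma ex0 : ex (0 : R) = 1.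
Proof. by rewrite /ex mulr0 cos0 sin0. Qed.

Lemma ex1 : ex (1 : R) = 1.
Proof. by rewrite /ex mulr1 mulr_natl cos2pi sin2pi. Qed.

Lemma ex_nat (n : nat) : ex (n%:R : R) = 1.
Proof.
elim: n => [|n IH]; first exact: ex0.
by rewrite -addn1 natrD exD IH ex1 mulr1.
Qed.

Lemma ex_mod (a N : nat) : (0 < N)%N ->
  ex (a%:R / N%:R : R) = ex ((a %% N)%:R / N%:R).
Proof.
move=> N0; rewrite {1}(divn_eq a N) natrD mulrDl natrM mulfK ?pnatr_eq0 -?lt0n //.
by rewrite exD ex_nat mul1r.
Qed.

Lemma ex_eqmod (a b N : nat) : (0 < N)%N -> a = b %[mod N] ->
  ex (a%:R / N%:R : R) = ex (b%:R / N%:R).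
Proof. by move=> N0 E; rewrite ex_mod // E -ex_mod. Qed.
End Ex.

Lemma mod_cancel N c r r' : coprime c N -> (r * c = r' * c %[mod N])%N -> (r = r' %[mod N])%N.
Proof.
move=> co; wlog le : r r' / (r' <= r)%N.
  move=> IH E; case: (leqP r' r) => [|/ltnW] H; first exact: IH.
  by apply/esym/IH.
move=> /eqP; rewrite eqn_mod_dvd ?leq_mul2r ?le ?orbT // -mulnBl.
rewrite Gauss_dvdl 1?coprime_sym // -eqn_mod_dvd // => /eqP //.
Qed.

Lemma sum_reindex (V : nmodType) N (F : nat -> V) c k : (0 < N)%N ->
  (forall n, F (n %% N)%N = F n) -> coprime c N ->
  \sum_(r < N) F (k + r * c)%N = \sum_(b < N) F b.
Proof.
move=> N0 FP co.
pose h := fun r : 'I_N => Ordinal (ltn_pmod (k + r * c) N0).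
have hi : injective h.
  move=> r r' /(congr1 val) /= /eqP; rewrite eqn_modDl => /eqP /(mod_cancel co).
  by rewrite !modn_small // => /val_inj.
rewrite [RHS](reindex_inj hi); apply: eq_bigr => r _ /=.
by rewrite FP.
Qed.

Lemma sum_split (V : nmodType) n m (f : nat -> V) :
  \sum_(b < n * m) f b = \sum_(t < n) \sum_(s < m) f (t * m + s)%N.
Proof.
elim: n => [|n IH]; first by rewrite mul0n !big_ord0.
rewrite big_ord_recr /= -IH mulSn addnC -!(big_mkord xpredT).
rewrite (big_cat_nat _ (leq_addr _ _)) //=; congr (_ + _).
rewrite -{1}[(n * m)%N]add0n big_addn addKn big_mkord.
by apply: eq_bigr => i _; rewrite addnC.
Qed.

Lemma sum_split' (V : nmodType) N n m (f : nat -> V) : N = (n * m)%N ->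
  \sum_(b < N) f b = \sum_(t < n) \sum_(s < m) f (t * m + s)%N.
Proof. by move=> ->; exact: sum_split. Qed.

Lemma jacobi_prime (b : int) q : prime q -> jacobi b q = legendre b q.
Proof. by move=> qp; rewrite /jacobi primes_prime // big_seq1 logn_prime // eqxx expr1. Qed.

Section Gauss.
Variable R : realType.
Local Notation C := R[i].

Lemma gauss_gen (N a : nat) : odd N -> (1 < N)%N -> squarefree N ->
  \sum_(b < N) (jacobi b N)%:~R * ex ((a * b)%:R / N%:R : R)
  = (jacobi a N)%:~R * gauss R N.
Proof.
move=> No N1 sqf; have N0 : (0 < N)%N by apply: ltnW.
have [co|nco] := boolP (coprime a N).
  pose F := fun n : nat => (jacobi n N)%:~R * ex (n%:R / N%:R : R) : C.
  have FP : forall n, F (n %% N)%N = F n.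
    by move=> n; rewrite /F jacobi_mod -ex_mod.
  rewrite /gauss -(@sum_reindex _ N F a 0 N0 FP co) mulr_sumr; apply: eq_bigr => r _.
  rewrite /F add0n PoszM jacobiM_num // intrM.
  have J : (jacobi a N)%:~R * (jacobi a N)%:~R = 1 :> C.
    by rewrite -intrM -expr2 jacobi_sq.
  by rewrite [in RHS](mulrC (jacobi r N)%:~R) !mulrA J mul1r mulnC.
have g1 : (1 < gcdn a N)%N.
  rewrite ltn_neqAle eq_sym nco /= gcdn_gt0 N0 orbT //.
set q := pdiv (gcdn a N).
have qp : prime q by apply: pdiv_prime.
have qa : (q %| a)%N := dvdn_trans (pdiv_dvd _) (dvdn_gcdl _ _).
have qN : (q %| N)%N := dvdn_trans (pdiv_dvd _) (dvdn_gcdr _ _).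
have qP : q \in primes N by rewrite mem_primes qp N0 qN.
rewrite (@jacobi0 a N q) // ?dvdzE // mul0r.
set m := (N %/ q)%N.
have Nqm : N = (q * m)%N by rewrite mulnC divnK.
have m0 : (0 < m)%N by rewrite Nqm muln_gt0 in N0; case/andP: N0.
have cqm : coprime q m.
  rewrite prime_coprime //; apply/negP => qm.
  have qle : (q < N.+1)%N by rewrite ltnS dvdn_leq.
  move: (forallP sqf (Ordinal qle)); rewrite /= qp /= => /negP; apply.
  by rewrite Nqm dvdn_pmul2l ?prime_gt0.
have [a' Ea] : exists a', a = (a' * q)%N by exists (a %/ q)%N; rewrite divnK.
rewrite (@sum_split' _ N q m (fun b : nat => (jacobi b N)%:~R * ex ((a*b)%:R / N%:R : R)) Nqm).
rewrite exchange_big /=.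
apply: big1 => s _.
have E1 : forall i : 'I_q, ex ((a * (i * m + s))%:R / N%:R : R) = ex ((a * s)%:R / N%:R).
  move=> i; apply: ex_eqmod => //.
  rewrite mulnDr {1}Ea Nqm (_ : (a' * q * (i * m) = (a' * i) * (q * m))%N) ?modnMDl //.
  ring.
have E2 : forall i : 'I_q, jacobi (i * m + s)%N N = jacobi (s + i * m)%N q * jacobi s m.
  move=> i; rewrite Nqm (jacobiM_den _ (prime_gt0 qp) m0) [(i * m + s)%N]addnC.
  by congr (_ * _); rewrite -[LHS]jacobi_mod addnC modnMDl jacobi_mod.
under eq_bigr do rewrite E1 E2 intrM.
rewrite -!mulr_suml.
pose F := fun n : nat => (jacobi n q)%:~R : C.
have FP : forall n, F (n %% q)%N = F n by move=> n; rewrite /F jacobi_mod.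
have cmq : coprime m q by rewrite coprime_sym.
rewrite (@sum_reindex _ q F m s (prime_gt0 qp) FP cmq) /F.
under eq_bigr do rewrite jacobi_prime //.
by rewrite -rmorph_sum /= legendre_sum ?(dvdn_odd qN No) // rmorph0 !mul0r.
Qed.
End Gauss.

Theorem corollary5 (R : realType) (R1 R2 R1inv : nat) :
  odd R1 -> (1 < R1)%N -> odd R2 -> (1 < R2)%N -> squarefree R2 ->
  coprime R1 R2 -> (R1 * R1inv %% R2 = 1)%N ->
  forall j k : nat, (j < R2)%N -> (k < R1)%N ->
    zak (fun n : nat => ((jacobi n (R1 * R2))%:~R : R[i])) R2 R1 j k
    = gauss R R2 * (jacobi R1 R2)%:~R
      * ex (- ((R1inv * j * k)%:R / R2%:R) : R)
      * (jacobi j R2)%:~R * (jacobi k R1)%:~R.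
Proof.
move=> R1o R11 R2o R21 sqf co inv j k jlt klt.
have R10 : (0 < R1)%N by apply: ltnW.
have R20 : (0 < R2)%N by apply: ltnW.
pose c := (R1inv * j)%N.
pose F := fun n : nat => (jacobi n R2)%:~R * ex ((c * n)%:R / R2%:R : R) : R[i].
have FP : forall n, F (n %% R2)%N = F n.
  move=> n; rewrite /F jacobi_mod; congr (_ * _); apply: ex_eqmod => //.
  by rewrite modnMmr.
rewrite /zak.
have E1 : forall r : 'I_R2, (jacobi (k + r * R1)%N (R1 * R2))%:~R * ex ((r * j)%:R / R2%:R : R)
   = (jacobi k R1)%:~R * ex (- ((R1inv * j * k)%:R / R2%:R) : R) * F (k + r * R1)%N.
  move=> r; rewrite jacobiM_den // intrM.
  have -> : jacobi (k + r * R1)%N R1 = jacobi k R1.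
    by rewrite -[LHS]jacobi_mod addnC modnMDl jacobi_mod.
  have -> : ex ((r * j)%:R / R2%:R : R)
      = ex (- ((R1inv * j * k)%:R / R2%:R)) * ex ((c * (k + r * R1))%:R / R2%:R).
    rewrite -exD /c mulnDr natrD mulrDl addKr; apply: ex_eqmod => //.
    rewrite (_ : (R1inv * j * (r * R1) = (r * j) * (R1 * R1inv))%N); last by ring.
    by rewrite -[((r * j * _) %% R2)%N]modnMmr inv muln1.
  rewrite /F; ring.
under eq_bigr do rewrite E1.
rewrite -mulr_sumr (@sum_reindex _ R2 F R1 k R20 FP co) /F.
rewrite gauss_gen // PoszM jacobiM_num // intrM.
have J1 : jacobi R1inv R2 = jacobi R1 R2.
  have H1 : jacobi R1 R2 * jacobi R1inv R2 = 1.
    by rewrite -jacobiM_num // -PoszM -jacobi_mod inv jacobi1.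
  have H2 : jacobi R1 R2 ^+ 2 = 1 by apply: jacobi_sq.
  by rewrite -[LHS]mul1r -H2 expr2 -mulrA H1 mulr1.
rewrite J1; ring.
Qed.
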